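(* For a fixed $\tau=\tau_1\ldots\tau_k\in\mathcal{S}_k$ and $n\ge k$, the number $\mathrm{inv}_n(\tau)$ of involutions in $\mathcal{S}_n$ which contain $\tau$ as a subsequence equals $$\sum_{j\in\mathcal{J}(\tau)}\binom{n-k}{k-j}t_{n-2k+j}.$$
   Context: $t_m$ denotes the number of involutions in $\mathcal{S}_m$ ($t_0=1$); terms with $k-j>n-k$ are $0$. A permutation $\pi=\pi_1\ldots\pi_n$ contains $\tau$ as a subsequence if there are indices $i_1<\cdots<i_k$ with $\pi_{i_r}=\tau_r$ for all $r$. The pattern of a word of $j$ distinct letters is its order-preserving relabeling by $\{1,\ldots,j\}$; the length-$j$ initial pattern of $\tau$ is the pattern of $\tau_1\ldots\tau_j$. The $j$-set $\mathcal{J}(\tau)$ of $\tau\in\mathcal{S}_k$ is the set consisting of $0$ together with all $j\in\{1,\ldots,k\}$ such that the length-$j$ initial pattern of $\tau$ is an involution in $\mathcal{S}_j$. *)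

(* Defs.v *)
(* Permutations of S_n are {perm 'I_n}, acting on {0,...,n-1}
   (the paper's letters 1..n shifted down by one; all notions below are
   invariant under this shift). *)
From mathcomp Require Import all_boot all_order all_fingroup.
Set Implicit Arguments. Unset Strict Implicit. Unset Printing Implicit Defensive.

Definition perm_word (n : nat) (p : 'S_n) : seq nat :=
  [seq (p i : nat) | i <- enum 'I_n].

Definition is_involution (n : nat) (p : 'S_n) : bool := (p * p == 1)%g.

Definition contains_subseq (k n : nat) (tau : 'S_k) (pi : 'S_n) : bool :=
  subseq (perm_word tau) (perm_word pi).

Definition inv_count (k n : nat) (tau : 'S_k) : nat :=
  #|[set pi : 'S_n | is_involution pi && contains_subseq tau pi]|.

Definition t_inv (m : nat) : nat := #|[set p : 'S_m | is_involution p]|.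

Definition pattern (s : seq nat) : seq nat :=
  [seq count (fun y => y < x) s | x <- s].

Definition is_involution_word (w : seq nat) : bool :=
  perm_eq w (iota 0 (size w)) &&
  all (fun i => nth 0 w (nth 0 w i) == i) (iota 0 (size w)).

Definition Jset (k : nat) (tau : 'S_k) : seq nat :=
  [seq j <- iota 0 k.+1 |
     (j == 0) || is_involution_word (pattern (take j (perm_word tau)))].

(* Main.v *)
Require Import Defs.
From mathcomp Require Import all_boot all_order all_fingroup.
From mathcomp Require Import zify.
Set Implicit Arguments. Unset Strict Implicit. Unset Printing Implicit Defensive.


Lemma lift_perm_inj n (i j : 'I_n.+1) : injective (@lift_perm n i j).
Proof.
move=> s t e; apply/permP => k.
have := congr1 (fun p : 'S_n.+1 => p (lift i k)) e.
by rewrite /= !lift_perm_lift => /lift_inj.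
Qed.

Lemma lift_perm_ex n (p : 'S_n.+1) i : exists s : 'S_n, p = lift_perm i (p i) s.
Proof.
pose f (k : 'I_n) := odflt k (unlift (p i) (p (lift i k))).
have fP k : lift (p i) (f k) = p (lift i k).
  rewrite /f; case: unliftP => [v -> //|].
  by move/perm_inj => /eqP; rewrite eq_sym (negbTE (neq_lift _ _)).
have finj : injective f.
  by move=> a b e; apply: (@lift_inj _ i); apply: (@perm_inj _ p); rewrite -!fP e.
exists (perm finj); apply/permP => x.
case: (unliftP i x) => [k ->|->]; last by rewrite lift_perm_id.
by rewrite lift_perm_lift permE fP.
Qed.

Lemma card_lift n (i j : 'I_n.+1) (P : pred 'S_n.+1) :
  #|[set p : 'S_n.+1 | (p i == j) && P p]| = #|[set s : 'S_n | P (lift_perm i j s)]|.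
Proof.
rewrite -(card_imset _ (@lift_perm_inj n i j)); apply: eq_card => p.
rewrite inE; apply/andP/imsetP => [[/eqP pij Pp]|[s]].
  have [s ps] := lift_perm_ex p i; exists s; last by rewrite ps pij.
  by rewrite inE -pij -ps.
by rewrite inE => Ps ->; rewrite lift_perm_id.
Qed.

Lemma map_bump_iota_small m n : n <= m -> map (bump m) (iota 0 n) = iota 0 n.
Proof.
move=> h; rewrite -{2}[iota 0 n]map_id; apply/eq_in_map => x.
by rewrite mem_iota add0n => hx; rewrite /bump leqNgt (leq_trans hx h).
Qed.

Lemma filter_iota_pred1 (m n : nat) : m <= n ->
  filter (predC1 m) (iota 0 n.+1) = map (bump m) (iota 0 n).
Proof.
elim: n => [|n IH]; first by case: m.
rewrite leq_eqVlt => /orP [/eqP ->|lt].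
  rewrite map_bump_iota_small // -[n.+2]addn1 iotaD filter_cat add0n.
  have -> : [seq x <- [:: n.+1] | predC1 n.+1 x] = [::] by rewrite /= eqxx.
  rewrite cats0; apply/all_filterP/allP => x; rewrite mem_iota /= => h.
  by rewrite neq_ltn h.
rewrite -[n.+2]addn1 iotaD filter_cat IH // -[n.+1]addn1 iotaD map_cat add0n.
have h1 : n.+1 != m by rewrite neq_ltn lt orbT.
by rewrite /= addn1 h1 add0n /bump -ltnS lt add1n.
Qed.

Lemma enum_rem n (m : 'I_n.+1) :
  filter (predC1 m) (enum 'I_n.+1) = map (lift m) (enum 'I_n).
Proof.
apply: (inj_map val_inj).
have -> : filter (predC1 m) (enum 'I_n.+1) =
          filter (preim val (predC1 (val m))) (enum 'I_n.+1).
  by apply: eq_filter => x /=.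
rewrite -filter_map val_enum_ord filter_iota_pred1; last by rewrite -ltnS ltn_ord.
by rewrite -map_comp (@eq_map _ _ _ (bump m \o val)) // map_comp val_enum_ord.
Qed.

Lemma filter_enum_drop n (g : 'I_n.+1 -> nat) (m : 'I_n.+1) (p : pred nat) :
  ~~ p (g m) ->
  filter p (map g (enum 'I_n.+1)) = filter p (map (g \o lift m) (enum 'I_n)).
Proof.
move=> npm; rewrite (filter_map g) (filter_map (g \o lift m)).
transitivity (map g (filter (preim g p) (filter (predC1 m) (enum 'I_n.+1)))).
  congr map; rewrite -(filter_predI (preim g p) (predC1 m)); apply: eq_filter => x /=.
  by case: (x =P m) => [->|]; rewrite ?(negbTE npm) ?andbT.
by rewrite enum_rem (filter_map (lift m)) -map_comp.
Qed.


Lemma lift_max_widen N (i : 'I_N) : lift ord_max i = widen_ord (leqnSn N) i.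
Proof. by apply: val_inj; rewrite /= /bump leqNgt ltn_ord. Qed.

Lemma perm_wordS N (p : 'S_N.+1) :
  perm_word p = rcons [seq (p (lift ord_max i) : nat) | i <- enum 'I_N] (p ord_max).
Proof.
rewrite /perm_word enum_ordSr map_rcons -map_comp; congr rcons.
by apply: eq_map => i /=; rewrite lift_max_widen.
Qed.

Lemma inv_lift n (i : 'I_n.+1) (s : 'S_n) :
  is_involution (lift_perm i i s) = is_involution s.
Proof.
rewrite /is_involution lift_permM -(lift_perm1 i).
by rewrite (inj_eq (@lift_perm_inj _ i i)).
Qed.

Definition G n (w : seq nat) :=
  #|[set p : 'S_n | is_involution p && (filter (fun x => x < size w) (perm_word p) == w)]|.

Definition H N (m : 'I_N) (w : seq nat) :=
  #|[set p : 'S_N.+1 | (p ord_max == lift ord_max m) &&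
      (is_involution p && (filter (fun x => x < size w) (perm_word p) == w))]|.

Lemma G_rec N w : size w <= N -> G N.+1 w = G N w + \sum_(m < N) H m w.
Proof.
move=> hN; rewrite /G -sum1dep_card (partition_big (fun p : 'S_N.+1 => p ord_max) xpredT) //=.
rewrite big_ord_recr /= addnC; congr (_ + _).
  rewrite sum1dep_card.
  transitivity #|[set p : 'S_N.+1 | (p ord_max == ord_max) &&
      (is_involution p && (filter (fun x => x < size w) (perm_word p) == w))]|.
    by apply: eq_card => p; rewrite !inE andbC.
  rewrite card_lift; apply: eq_card => s; rewrite !inE inv_lift perm_wordS.
  rewrite lift_perm_id filter_rcons /= ltnNge hN /=; congr (_ && (_ == _)).
  rewrite /perm_word; congr filter; apply: eq_map => i.
  by rewrite lift_perm_lift lift_max.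
apply: eq_bigr => m _; rewrite sum1dep_card /H; apply: eq_card => p.
by rewrite !inE andbC lift_max_widen.
Qed.


Lemma bump_small h i : i < h -> bump h i = i.
Proof. by move=> lt; rewrite /bump leqNgt lt. Qed.

Lemma bump_le h i : bump h i <= i.+1.
Proof. by rewrite /bump; case: (h <= i). Qed.


Definition Phi N (m : 'I_N.+1) (r : 'S_N) : 'S_N.+2 :=
  lift_perm ord_max (lift ord_max m) (lift_perm m ord_max r).

Lemma K1 N (m : 'I_N.+1) r : Phi m r ord_max = lift ord_max m.
Proof. by rewrite /Phi lift_perm_id. Qed.

Lemma K2 N (m : 'I_N.+1) r : Phi m r (lift ord_max m) = ord_max.
Proof.
rewrite /Phi lift_perm_lift lift_perm_id; apply: val_inj => /=.
rewrite (bump_small (ltn_ord m)) /bump -ltnS ltn_ord.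
by rewrite add1n.
Qed.

Lemma K3 N (m : 'I_N.+1) r y : Phi m r (lift ord_max (lift m y)) = lift ord_max (lift m (r y)).
Proof.
rewrite /Phi !lift_perm_lift; apply: val_inj => /=.
rewrite (bump_small (ltn_ord m)) (bump_small (ltn_ord (r y))).
rewrite (bump_small (leq_ltn_trans (bump_le _ _) _)) //.
by rewrite ltnS ltn_ord.
Qed.

Lemma inv_Phi N (m : 'I_N.+1) r : is_involution (Phi m r) = is_involution r.
Proof.
rewrite /is_involution; apply/eqP/eqP => h.
  apply/permP => y; have := congr1 (fun p : 'S_N.+2 => p (lift ord_max (lift m y))) h.
  rewrite !permM !K3 perm1 => /lift_inj /lift_inj; rewrite -permM => ->; by rewrite perm1.
apply/permP => x; rewrite permM perm1.
case: (unliftP ord_max x) => [x' ->|->]; last by rewrite K1 K2.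
case: (unliftP m x') => [y ->|->]; last by rewrite K2 K1.
by rewrite !K3 -permM h perm1.
Qed.

Lemma word_Phi N (m : 'I_N.+1) r :
  perm_word (Phi m r) = rcons [seq (Phi m r (lift ord_max i) : nat) | i <- enum 'I_N.+1] m.
Proof. by rewrite perm_wordS K1 lift_max. Qed.

Lemma filt_Phi N (m : 'I_N.+1) r k : k <= N.+1 ->
  filter (fun x => x < k) [seq (Phi m r (lift ord_max i) : nat) | i <- enum 'I_N.+1] =
  filter (fun x => x < k) (map (bump m) (perm_word r)).
Proof.
move=> hk; rewrite (@filter_enum_drop N (fun i => (Phi m r (lift ord_max i) : nat)) m (fun x => x < k)).
  by rewrite /perm_word -map_comp; congr filter; apply: eq_map => y /=; rewrite K3 lift_max.
by rewrite K2 /= -leqNgt.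
Qed.



Lemma filter_bump_ge k m s : k <= m ->
  filter (fun x => x < k) (map (bump m) s) = filter (fun x => x < k) s.
Proof.
move=> hk; elim: s => //= x s ->; rewrite /bump.
case: (leqP m x) => hx /=; last by rewrite add0n.
by rewrite add1n !ltnNge (leq_trans hk hx) (leq_trans hk (leqW hx)).
Qed.

Lemma filter_bump_lt k m s : m < k ->
  filter (fun x => x < k) (map (bump m) s) = map (bump m) (filter (fun x => x < k.-1) s).
Proof.
move=> hk; elim: s => //= x s IH.
have e : (bump m x < k) = (x < k.-1).
  rewrite /bump; case: (leqP m x) => hx; rewrite ?add1n ?add0n; apply/idP/idP; lia.
by rewrite e; case: ifP => _; rewrite IH.
Qed.

Lemma lift_forces N (m : 'I_N.+1) (s : 'S_N.+1) :
  is_involution (lift_perm ord_max (lift ord_max m) s) -> s m = ord_max.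
Proof.
move=> /eqP h; have := congr1 (fun p : 'S_N.+2 => p ord_max) h.
rewrite permM perm1 lift_perm_id lift_perm_lift => e.
have := congr1 val e => /=; rewrite (bump_small (ltn_ord m)) => e2.
apply: val_inj => /=; have := ltn_ord (s m); rewrite ltnS leq_eqVlt => /orP [/eqP //|lt].
by move: (bump_le m (s m)); rewrite e2 ltnS leqNgt lt.
Qed.

Lemma H_Phi N (m : 'I_N.+1) w :
  H m w = #|[set r : 'S_N | is_involution r &&
             (filter (fun x => x < size w) (perm_word (Phi m r)) == w)]|.
Proof.
rewrite /H card_lift.
transitivity #|[set s : 'S_N.+1 | (s m == ord_max) &&
     (is_involution (lift_perm ord_max (lift ord_max m) s) &&
      (filter (fun x => x < size w) (perm_word (lift_perm ord_max (lift ord_max m) s)) == w))]|.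
  apply: eq_card => s; rewrite !inE.
  by case h: (is_involution _); rewrite ?andbF //= (lift_forces h) eqxx.
rewrite card_lift; apply: eq_card => r; rewrite !inE /Phi.
by rewrite -[lift_perm ord_max (lift ord_max m) _]/(Phi m r) inv_Phi.
Qed.

Lemma H_ge N (m : 'I_N.+1) w : size w <= m -> H m w = G N w.
Proof.
move=> hk; rewrite H_Phi /G; apply: eq_card => r; rewrite !inE.
rewrite word_Phi filter_rcons ltnNge hk /= filt_Phi; last first.
  by apply: (leq_trans hk); apply: ltnW; apply: ltn_ord.
by rewrite filter_bump_ge.
Qed.

Lemma H_lt N (m : 'I_N.+1) u m0 : m < (size u).+1 -> (size u).+1 <= N.+1 -> m0 \notin u ->
  H m (rcons u m0) = (m == m0 :> nat) * G N (map (unbump m0) u).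
Proof.
move=> hk hN hu; rewrite H_Phi size_rcons.
case: eqP => [em|nem]; last first.
  rewrite mul0n; apply/eqP; rewrite cards_eq0; apply/eqP/setP => r; rewrite !inE.
  rewrite word_Phi filter_rcons hk eqseq_rcons.
  have /negbTE -> : m != m0 :> nat by apply/eqP.
  by rewrite !andbF.
rewrite -[true : nat]/1 mul1n /G size_map; apply: eq_card => r; rewrite !inE.
rewrite word_Phi filter_rcons hk filt_Phi //.
rewrite filter_bump_lt // eqseq_rcons em eqxx andbT /=.
congr (_ && _); apply/eqP/eqP => [h|h].
  by rewrite -[in RHS]h -map_comp (eq_map (bumpK m0)) map_id.
rewrite h -map_comp -{2}[u]map_id; apply/eq_in_map => x xu /=.
by rewrite unbumpK //= inE; apply: contraNneq hu => <-.
Qed.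


Lemma sum_ge n k : \sum_(m < n) (k <= m : nat) = n - k.
Proof.
elim: n => [|n IH]; first by rewrite big_ord0.
rewrite big_ord_recr /= IH; case: (leqP k n) => h /=; lia.
Qed.

Lemma sum_eq n (m0 : nat) : \sum_(m < n) (m == m0 :> nat : nat) = (m0 < n).
Proof.
elim: n => [|n IH]; first by rewrite big_ord0.
rewrite big_ord_recr /= IH ltnS leq_eqVlt; case: (ltngtP m0 n) => h /=; lia.
Qed.

Lemma G_rec_nil N : G N.+2 [::] = G N.+1 [::] + N.+1 * G N [::].
Proof.
rewrite G_rec // (eq_bigr (fun _ => G N [::])); last by move=> m _; rewrite H_ge.
by rewrite sum_nat_const card_ord mulnC.
Qed.

Lemma G_rec_cons N u m0 : (size u).+1 <= N.+1 -> m0 < (size u).+1 -> m0 \notin u ->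
  G N.+2 (rcons u m0) = G N.+1 (rcons u m0) + (N.+1 - (size u).+1) * G N (rcons u m0)
     + G N (map (unbump m0) u).
Proof.
move=> hN hm0 hu; rewrite G_rec ?size_rcons // -addnA; congr (_ + _).
rewrite (eq_bigr (fun m : 'I_N.+1 => ((size u).+1 <= m : nat) * G N (rcons u m0)
          + (m == m0 :> nat : nat) * G N (map (unbump m0) u))); last first.
  move=> m _; case: (leqP (size u).+1 m) => h.
    rewrite H_ge ?size_rcons //; have /negbTE -> : (m : nat) != m0.
      by apply/eqP => e; move: hm0; rewrite -e ltnNge h.
    by rewrite mul1n addn0.
  by rewrite H_lt // mul0n add0n.
rewrite big_split /= -!big_distrl /= sum_ge sum_eq.
by rewrite (leq_trans hm0 hN) mul1n.
Qed.

Lemma tG m : t_inv m = G m [::].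
Proof.
rewrite /t_inv /G; apply: eq_card => p; rewrite !inE.
by rewrite (@eq_filter _ _ pred0) ?filter_pred0 ?andbT // => x; rewrite ltn0.
Qed.

Lemma t_rec a : 0 < a -> t_inv a = t_inv a.-1 + a.-1 * t_inv a.-2.
Proof.
case: a => // [[|N]] _.
  by rewrite !tG G_rec // big_ord0 /= mul0n.
by rewrite !tG G_rec_nil.
Qed.


Lemma size_perm_word n (p : 'S_n) : size (perm_word p) = n.
Proof. by rewrite size_map size_enum_ord. Qed.

Lemma nth_perm_word n (p : 'S_n) (i : 'I_n) : nth 0 (perm_word p) i = p i.
Proof. by rewrite (nth_map i) ?size_enum_ord ?ltn_ord // nth_ord_enum. Qed.

Lemma uniq_perm_word n (p : 'S_n) : uniq (perm_word p).
Proof.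
rewrite map_inj_uniq ?enum_uniq // => i j /val_inj; exact: perm_inj.
Qed.

Lemma all_perm_word n (p : 'S_n) : all (fun x => x < n) (perm_word p).
Proof. by apply/allP => x /mapP [i _ ->]. Qed.

Lemma perm_word_inj n : injective (@perm_word n).
Proof.
move=> p q e; apply/permP => i; apply: val_inj.
by have := congr1 (fun s => nth 0 s i) e; rewrite /= !nth_perm_word.
Qed.

Lemma mem_word k w : size w = k -> uniq w -> all (fun x => x < k) w -> w =i iota 0 k.
Proof.
move=> sw uw aw.
have sub : {subset w <= iota 0 k}.
  by move=> x xw; rewrite mem_iota add0n (allP aw x xw).
by have [] := uniq_min_size uw sub; rewrite ?size_iota ?sw.
Qed.

Lemma word_perm n w : size w = n -> uniq w -> all (fun x => x < n) w ->
  exists p : 'S_n, perm_word p = w.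
Proof.
case: n => [|n] sw uw aw.
  exists 1%g; move/size0nil: sw => ->; apply/eqP; rewrite -size_eq0.
  by rewrite size_perm_word.
pose f (i : 'I_n.+1) : 'I_n.+1 := inord (nth 0 w i).
have fv i : (f i : nat) = nth 0 w i.
  by rewrite inordK // (allP aw) // mem_nth // sw ltn_ord.
have finj : injective f.
  move=> i j /(congr1 (@nat_of_ord _)); rewrite !fv => /eqP; rewrite nth_uniq ?sw ?ltn_ord //.
  by move/eqP/val_inj.
exists (perm finj); rewrite /perm_word.
rewrite (eq_map (g := fun i : 'I_n.+1 => nth 0 w i)); last by move=> i; rewrite permE fv.
rewrite (map_comp (nth 0 w) (@nat_of_ord _)) val_enum_ord -sw; exact: mkseq_nth.
Qed.

Lemma inv_word n (p : 'S_n) : is_involution_word (perm_word p) = is_involution p.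
Proof.
rewrite /is_involution_word size_perm_word.
have -> : perm_eq (perm_word p) (iota 0 n).
  apply: uniq_perm; rewrite ?iota_uniq ?uniq_perm_word //.
  apply: mem_word; [exact: size_perm_word|exact: uniq_perm_word|exact: all_perm_word].
rewrite /= -val_enum_ord all_map /is_involution.
apply/allP/eqP => [h|h i _] /=.
  apply/permP => i; apply: val_inj; have := h i (mem_enum _ i) => /=.
  by rewrite nth_perm_word nth_perm_word permM perm1 => /eqP.
by rewrite nth_perm_word nth_perm_word -permM h perm1.
Qed.

Lemma G_base k w : size w = k -> uniq w -> all (fun x => x < k) w ->
  G k w = is_involution_word w.
Proof.
move=> sw uw aw; have [p0 e0] := word_perm sw uw aw.
rewrite /G sw.
transitivity #|[set p : 'S_k | is_involution p && (p == p0)]|.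
  apply: eq_card => p; rewrite !inE (elimT all_filterP (all_perm_word p)).
  by rewrite -e0 (inj_eq (@perm_word_inj k)).
rewrite -e0 inv_word; case h: (is_involution p0).
  rewrite (eq_card (B := pred1 p0)) ?card1 // => p; rewrite !inE.
  by case: eqP => [->|]; rewrite ?h ?andbF.
by apply/eqP; rewrite cards_eq0; apply/eqP/setP => p; rewrite !inE; case: eqP => [->|]; rewrite ?h ?andbF.
Qed.


Lemma pattern_map (f : nat -> nat) s :
  {in s &, forall x y, (f x < f y) = (x < y)} -> pattern (map f s) = pattern s.
Proof.
move=> h; rewrite /pattern -map_comp; apply/eq_in_map => x xs /=.
by rewrite count_map; apply/eq_in_count => y ys /=; rewrite h.
Qed.

Lemma count_lt_iota x k : x <= k -> count (fun y => y < x) (iota 0 k) = x.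
Proof.
move=> h; rewrite -(subnKC h) iotaD count_cat add0n.
rewrite (@eq_in_count _ _ predT) ?count_predT ?size_iota; last first.
  by move=> y; rewrite mem_iota add0n => /andP [].
rewrite (@eq_in_count _ _ pred0) ?count_pred0 ?addn0 // => y.
by rewrite mem_iota => /andP [hy _]; rewrite /= ltnNge hy.
Qed.

Lemma pattern_id k w : size w = k -> uniq w -> all (fun x => x < k) w -> pattern w = w.
Proof.
move=> sw uw aw; have pw : perm_eq w (iota 0 k).
  by apply: uniq_perm; rewrite ?iota_uniq //; apply: mem_word.
rewrite /pattern -[RHS]map_id; apply/eq_in_map => x xw /=.
rewrite (seq.permP pw) count_lt_iota //; apply: ltnW; exact: (allP aw).
Qed.

Lemma unbump_mono h x y : x != h -> y != h -> (unbump h x < unbump h y) = (x < y).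
Proof.
move=> /eqP hx /eqP hy; rewrite /unbump.
case: (ltnP h x) => a; case: (ltnP h y) => b /=; apply/idP/idP; lia.
Qed.

Lemma P_rcons u m0 j : j <= size u -> m0 \notin u ->
  is_involution_word (pattern (take j (rcons u m0))) =
  is_involution_word (pattern (take j (map (unbump m0) u))).
Proof.
move=> hj hu; rewrite -cats1 takel_cat // -map_take pattern_map // => x y xu yu.
apply: unbump_mono.
  by apply: contraNneq hu => <-; exact: mem_take xu.
by apply: contraNneq hu => <-; exact: mem_take yu.
Qed.


Lemma key (t : nat -> nat) (ht : forall a, 0 < a -> t a = t a.-1 + a.-1 * t a.-2) N k j :
  0 < k -> j < k -> k <= N.+1 ->
  'C(N.+2 - k, k - j) * t (N.+2 + j - 2 * k) =
  'C(N.+1 - k, k - j) * t (N.+1 + j - 2 * k) + (N.+1 - k) * ('C(N - k, k - j) * t (N + j - 2 * k))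
  + 'C(N - k.-1, k.-1 - j) * t (N + j - 2 * k.-1).
Proof.
move=> hk hj hN.
have [a' ea] : exists a', N.+2 - k = a'.+1 by exists (N.+1 - k); lia.
have [b' eb] : exists b', k - j = b'.+1 by exists (k - j).-1; lia.
have e1 : N.+1 - k = a' by lia.
have e2 : N - k = a'.-1 by lia.
have e3 : N - k.-1 = a' by lia.
have e4 : k.-1 - j = b' by lia.
rewrite ea eb e1 e2 e3 e4 binS.
case: (ltnP a' b') => hab.
  rewrite !(@bin_small a') ?(@bin_small a'.-1) //; try lia.
have f1 : N.+2 + j - 2 * k = a' - b' by lia.
have f2 : N.+1 + j - 2 * k = (a' - b').-1 by lia.
have f3 : N + j - 2 * k = (a' - b').-2 by lia.
have f4 : N + j - 2 * k.-1 = a' - b' by lia.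
rewrite f1 f2 f3 f4.
case: (ltnP b' a') => hc; last first.
  have -> : a' = b' by lia.
  rewrite subnn (@bin_small b') ?(@bin_small b'.-1) //; try lia.
rewrite (ht (a' - b')); last by lia.
have := mul_bin_down a' b'.+1.
have -> : a' - b'.+1 = (a' - b').-1 by lia.
move=> m; nia.
Qed.


Definition Pw (w : seq nat) j := (j == 0) || is_involution_word (pattern (take j w)).
Definition Fs k n w := \sum_(j <- [seq j <- iota 0 k.+1 | Pw w j])
   'C(n - k, k - j) * t_inv (n + j - 2 * k).

Lemma Fs_ord k n w : Fs k n w =
  \sum_(j < k.+1) (Pw w j : nat) * ('C(n - k, k - j) * t_inv (n + j - 2 * k)).
Proof.
rewrite /Fs big_filter -[iota 0 k.+1]/(index_iota 0 k.+1) big_mkord big_mkcond.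
by apply: eq_bigr => j _; case: (Pw w j); rewrite ?mul1n ?mul0n.
Qed.

Lemma sum_comb K c (A B C D : nat -> nat) :
  (forall j, j <= K -> A j = B j + c * C j + (j < K) * D j) ->
  \sum_(j < K.+1) A j = \sum_(j < K.+1) B j + c * \sum_(j < K.+1) C j + \sum_(j < K) D j.
Proof.
move=> h; rewrite (eq_bigr (fun j : 'I_K.+1 => B j + c * C j + (j < K) * D j)); last first.
  by move=> j _; apply: h; rewrite -ltnS ltn_ord.
rewrite !big_split /= -big_distrr /=; congr (_ + _).
rewrite big_ord_recr /= ltnn mul0n addn0; apply: eq_bigr => j _.
by rewrite /= ltn_ord mul1n.
Qed.

Lemma t0 : t_inv 0 = 1.
Proof. by rewrite tG (G_base (k := 0)). Qed.

Lemma MT n : forall k w, size w = k -> uniq w -> all (fun x => x < k) w -> k <= n ->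
  G n w = Fs k n w.
Proof.
elim/ltn_ind: n => n IH k w sw uw aw hkn.
case: k sw aw hkn => [|k'] sw aw hkn.
  move/size0nil: sw => ->; rewrite Fs_ord big_ord1 /= -tG.
  by rewrite mul1n bin0 mul1n subn0 addn0.
move: hkn; rewrite leq_eqVlt => /orP [/eqP en|lt].
  rewrite -en G_base // Fs_ord big_ord_recr /= big1; last first.
    move=> j _; rewrite subnn bin_small ?mul0n ?muln0 //.
    by rewrite subn_gt0 ltn_ord.
  rewrite subnn bin0 (_ : k'.+1 + k'.+1 - 2 * k'.+1 = 0); last by lia.
  rewrite t0 add0n mul1n muln1 /Pw /=.
  by rewrite take_oversize ?sw // (pattern_id sw uw aw).
case: n IH lt => [|[|N]] IH lt //.
case/lastP: w sw uw aw => [|u m0] //; rewrite size_rcons => -[su].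
rewrite rcons_uniq all_rcons => /andP [hu uu] /andP [hm0 au].
have hN : (size u).+1 <= N.+1 by rewrite su.
rewrite G_rec_cons //; rewrite ?su //.
set w' := map (unbump m0) u.
have sw' : size w' = k' by rewrite size_map.
have uw' : uniq w'.
  rewrite map_inj_in_uniq // => x y xu yu.
  have nx : x != m0 by apply: contraNneq hu => <-.
  have ny : y != m0 by apply: contraNneq hu => <-.
  by move/(congr1 (bump m0)); rewrite !unbumpK.
have aw' : all (fun x => x < k') w'.
  apply/allP => z /mapP [x xu ->]; have := allP au x xu.
  have nx : x != m0 by apply: contraNneq hu => <-.
  move: nx hm0; rewrite /unbump; case: (ltnP m0 x) => a /eqP b c d /=; lia.
rewrite (IH N.+1 (ltnSn _) k'.+1 (rcons u m0)) ?size_rcons ?su ?rcons_uniq ?hu ?all_rcons ?hm0 //.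
rewrite (IH N (leqW (ltnSn _)) k' w') //.
have -> : (N.+1 - k'.+1) * G N (rcons u m0) = (N.+1 - k'.+1) * Fs k'.+1 N (rcons u m0).
  case: (leqP k'.+1 N) => h; last by have -> : N.+1 - k'.+1 = 0 by lia.
  by rewrite (IH N (leqW (ltnSn _)) k'.+1 (rcons u m0)) ?size_rcons ?su ?rcons_uniq ?hu ?all_rcons ?hm0.
rewrite !Fs_ord; symmetry.
apply: (@sum_comb k'.+1 (N.+1 - k'.+1)
  (fun j => Pw (rcons u m0) j * ('C(N.+2 - k'.+1, k'.+1 - j) * t_inv (N.+2 + j - 2 * k'.+1)))
  (fun j => Pw (rcons u m0) j * ('C(N.+1 - k'.+1, k'.+1 - j) * t_inv (N.+1 + j - 2 * k'.+1)))
  (fun j => Pw (rcons u m0) j * ('C(N - k'.+1, k'.+1 - j) * t_inv (N + j - 2 * k'.+1)))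
  (fun j => Pw w' j * ('C(N - k', k' - j) * t_inv (N + j - 2 * k')))) => j hj.
case: (ltnP j k'.+1) => hjk /=.
  have -> : Pw w' j = Pw (rcons u m0) j.
    rewrite /Pw; case: (j == 0) => //=; rewrite P_rcons // su; lia.
  case: (Pw (rcons u m0) j); rewrite ?mul0n ?mul1n ?muln0 //.
  by rewrite (@key t_inv t_rec N k'.+1 j) //= mul1n.
have ej : j = k'.+1 by lia.
rewrite ej subnn !bin0 !mul1n mul0n addn0.
have a1 : N.+2 + k'.+1 - 2 * k'.+1 = N.+2 - k'.+1 by lia.
have a2 : N.+1 + k'.+1 - 2 * k'.+1 = (N.+2 - k'.+1).-1 by lia.
have a3 : N + k'.+1 - 2 * k'.+1 = (N.+2 - k'.+1).-2 by lia.
have a4 : N.+1 - k'.+1 = (N.+2 - k'.+1).-1 by lia.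
rewrite a1 a2 a3 a4 (t_rec (a := N.+2 - k'.+1)); last by lia.
by case: (Pw _ _); rewrite ?mul1n ?mul0n ?muln0.
Qed.


Theorem mainTheorem3 (k n : nat) (tau : 'S_k) (hkn : k <= n) :
  inv_count n tau =
  \sum_(j <- Jset tau) 'C(n - k, k - j) * t_inv (n + j - 2 * k).
Proof.
have -> : inv_count n tau = G n (perm_word tau).
  rewrite /inv_count /G size_perm_word; apply: eq_card => p; rewrite !inE; congr (_ && _).
  have eqf : filter (mem (perm_word tau)) (perm_word p) =
             filter (fun x => x < k) (perm_word p).
    apply: eq_filter => x /=.
    by rewrite (mem_word (size_perm_word tau) (uniq_perm_word tau) (all_perm_word tau)) mem_iota.
  rewrite /contains_subseq -eqf; apply/idP/eqP.
    by move/(@subseq_uniqP _ (perm_word tau) (perm_word p) (uniq_perm_word p)) => e; rewrite -e.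
  by move=> e; apply/(@subseq_uniqP _ (perm_word tau) (perm_word p) (uniq_perm_word p)); rewrite e.
rewrite (@MT n k) ?size_perm_word ?uniq_perm_word ?all_perm_word //.
Qed.
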